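(* Let $n\ge2$ and $1\le\ell\le s$ be integers, and consider the saturation SQGT model with thresholds $(1,2,\dots,s)$, in which a test $\mathbf{x}\in\{0,1\}^n$ applied to $\mathbf{b}$ returns $\min(\mathbf{x}\cdot\mathbf{b},s)$. Let $m=\lceil\log_2 n\rceil$ and let $\mathbf{N}$ be the $(m+1)\times n$ binary matrix with $\mathbf{N}(r,j)$ equal to the $r$-th binary digit of $j$ (i.e. $\lfloor j/2^r\rfloor\bmod2$) for $0\le r<m$, $0\le j<n$, and whose last row is all ones. Then $\mathbf{N}$ solves $\mathrm{Burst}(n,\le\ell,\underline{\eta})$: any two distinct bursts in $\{0,1\}^n$ of lengths between $1$ and $\ell$ yield distinct outcome vectors. Thus $\lceil\log_2 n\rceil+1$ measurements suffice.
   Context: Items are indexed $0,\dots,n-1$. A burst with head $a$ and tail $t$ ($0\le a\le t\le n-1$) is the vector in $\{0,1\}^n$ whose $j$-th coordinate is $1$ iff $a\le j\le t$; its length is $t-a+1$. $\mathrm{Burst}(n,\le\ell,\underline{\eta})$ is the problem of identifying an unknown burst of length in $\{1,\dots,\ell\}$ from the outcome vector (entrywise outcomes of the rows of the test matrix). *)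

(* Defs.v *)
From mathcomp Require Import all_boot all_order.
Set Implicit Arguments. Unset Strict Implicit. Unset Printing Implicit Defensive.

(* ceil(log2 n) = smallest e with n <= 2^e (for n >= 1) *)
Definition ceil_log2 (n : nat) : nat := up_log 2 n.

Definition burst (n a t : nat) : {ffun 'I_n -> nat} :=
  [ffun j : 'I_n => ((a <= j) && (j <= t) : nat)].

Definition is_burst_le (n l a t : nat) : Prop :=
  a <= t /\ t < n /\ t - a + 1 <= l.

Definition Nmat (n : nat) (r : 'I_(ceil_log2 n).+1) (j : 'I_n) : nat :=
  if r < ceil_log2 n then (j %/ 2 ^ r) %% 2 else 1.

Definition sat_outcome (n s : nat) (x b : {ffun 'I_n -> nat}) : nat :=
  minn (\sum_(j < n) x j * b j) s.

Definition outcome (n s : nat) (b : {ffun 'I_n -> nat}) : {ffun 'I_(ceil_log2 n).+1 -> nat} :=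
  [ffun r => sat_outcome s [ffun j => Nmat r j] b].

(* Main.v *)
Require Import Defs.
From mathcomp Require Import all_boot all_order.
From mathcomp Require Import zify.

Lemma mod2d (j d : nat) : 0 < d -> j %% (d * 2) = j %% d + d * (j %/ d %% 2).
Proof.
move=> d0.
have Hd2 : 0 < d * 2 by lia.
rewrite {1}(divn_eq j d) {1}(divn_eq (j %/ d) 2).
set q := j %/ d %/ 2; set b := j %/ d %% 2; set r := j %% d.
have hb : b < 2 by rewrite /b ltn_mod.
have hr : r < d by rewrite /r ltn_mod.
have -> : (q * 2 + b) * d + r = q * (d * 2) + (r + d * b) by lia.
rewrite modnMDl modn_small //; nia.
Qed.

Lemma bits_sum (m j : nat) : \sum_(r < m) 2 ^ r * (j %/ 2 ^ r %% 2) = j %% 2 ^ m.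
Proof.
elim: m => [|m IH]; first by rewrite big_ord0 expn0 modn1.
rewrite big_ord_recr /= IH expnS [2 * _]mulnC mod2d ?expn_gt0 // addnC.
Qed.

Lemma sum_burst (n a t : nat) (f : nat -> nat) : a <= t -> t < n ->
  \sum_(j < n) burst n a t j * f j = \sum_(a <= j < t.+1) f j.
Proof.
move=> hat htn.
rewrite (eq_bigr (fun j : 'I_n => ((a <= j) && (j <= t) : nat) * f j));
  last by move=> j _; rewrite ffunE.
rewrite -(big_mkord xpredT (fun j => ((a <= j) && (j <= t) : nat) * f j)).
rewrite (big_cat_nat _ (n:=a)) //=; last by lia.
rewrite (big_cat_nat _ (m:=a) (n:=t.+1)) //=; last by lia.
rewrite big1_seq ?add0n; last first.
  by move=> i /andP[_]; rewrite mem_index_iota => /andP[_ hi]; rewrite leqNgt hi.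
rewrite [X in _ + X]big1_seq ?addn0; last first.
  by move=> i /andP[_]; rewrite mem_index_iota => /andP[hi _];
     rewrite (leqNgt i t) hi andbF.
apply: eq_big_seq => i; rewrite mem_index_iota => /andP[h1 h2].
by rewrite h1 -ltnS h2 mul1n.
Qed.

Lemma Nmat_le1 n (r : 'I_(ceil_log2 n).+1) j : Nmat r j <= 1.
Proof. rewrite /Nmat; case: ifP => // _; by rewrite -ltnS ltn_mod. Qed.

Lemma outcome_val n l s a t (r : 'I_(ceil_log2 n).+1) : l <= s ->
  is_burst_le n l a t ->
  outcome s (burst n a t) r = \sum_(j < n) Nmat r j * burst n a t j.
Proof.
move=> hls [hat [htn hl]].
rewrite /outcome ffunE /sat_outcome.
rewrite (eq_bigr (fun j => Nmat r j * burst n a t j)); last by move=> j _; rewrite ffunE.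
apply/minn_idPl.
apply: (leq_trans (n := \sum_(j < n) burst n a t j * 1)).
  by apply: leq_sum => j _; rewrite mulnC leq_mul2l Nmat_le1 orbT.
rewrite (@sum_burst _ _ _ (fun _ => 1)) // sum_nat_const_nat; lia.
Qed.

Lemma last_row n l s a t : l <= s -> is_burst_le n l a t ->
  outcome s (burst n a t) ord_max = t.+1 - a.
Proof.
move=> hls hb; rewrite (outcome_val _ _ _ _ _ _ hls hb).
case: hb => [hat [htn _]].
rewrite (eq_bigr (fun j => burst n a t j * 1)); last first.
  by move=> j _; rewrite /Nmat ltnn mul1n muln1.
by rewrite (@sum_burst _ _ _ (fun _ => 1)) // sum_nat_const_nat muln1.
Qed.

Lemma weighted n l s a t : 2 <= n -> l <= s -> is_burst_le n l a t ->
  \sum_(r < ceil_log2 n) 2 ^ r * outcome s (burst n a t) (widen_ord (leqnSn _) r)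
  = \sum_(i < t.+1 - a) i + (t.+1 - a) * a.
Proof.
move=> hn hls hb.
have hb' := hb; case: hb' => [hat [htn _]].
under eq_bigr => r _ do rewrite (outcome_val _ _ _ _ _ _ hls hb) big_distrr.
rewrite exchange_big /=.
rewrite (eq_bigr (fun j : 'I_n => burst n a t j * j)); last first.
  move=> j _.
  rewrite -[in RHS](modn_small (m := j) (d := 2 ^ ceil_log2 n)); last first.
    apply: (leq_trans (ltn_ord j)); exact: up_logP.
  rewrite -bits_sum big_distrr /=; apply: eq_bigr => r _.
  by rewrite /Nmat /= ltn_ord; lia.
rewrite (@sum_burst _ _ _ id) //.
rewrite -{1}[a]add0n big_addn.
rewrite big_split /= sum_nat_const_nat subn0 big_mkord.
by [].
Qed.

Theorem mainTheorem9 (n l s : nat) :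
  2 <= n -> 1 <= l -> l <= s ->
  forall a1 t1 a2 t2 : nat,
    is_burst_le n l a1 t1 -> is_burst_le n l a2 t2 ->
    burst n a1 t1 <> burst n a2 t2 ->
    outcome s (burst n a1 t1) <> outcome s (burst n a2 t2).
Proof.
move=> hn hl hls a1 t1 a2 t2 hb1 hb2 hne heq.
have L := last_row _ _ _ _ _ hls hb1.
rewrite heq (last_row _ _ _ _ _ hls hb2) in L.
have W := weighted _ _ _ _ _ hn hls hb1.
rewrite heq (weighted _ _ _ _ _ hn hls hb2) -L in W.
move: hb1 hb2 => [h1 _] [h2 _].
have e : a2 = a1.
  apply/eqP; rewrite -(@eqn_pmul2l (t1.+1 - a1)); last by lia.
  rewrite -(eqn_add2l (\sum_(i < t1.+1 - a1) i)). by rewrite L in W; rewrite W.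
subst a2; have e : t2 = t1 by lia.
by subst t2; apply: hne.
Qed.
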